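(* Let $p$ be a prime, $q=p^r$, $\mathscr{C}\subseteq\mathbb{F}_q^n$ a linear code over $\mathbb{F}_q$ of dimension $k$ ($1\le k<n$), $\mathscr{D}\subseteq\mathbb{F}_{q^k}^m$ a linear code over $\mathbb{F}_{q^k}$ of dimension $s$ ($1\le s<m$) such that for each $1\le i\le m$ some codeword has $i$-th coordinate $1$, $\kappa:\mathbb{F}_{q^k}\to\mathcal{L}(\mathscr{C},\mathbb{F}_p)$ an $\mathbb{F}_p$-linear isomorphism, $f_\lambda=\kappa(\lambda)$, and $Q=\operatorname{span}\{\Phi_\Lambda:\Lambda\in\mathscr{D}\}$ the stabilizer code described in the context, with minimum distance $\delta$. If $d(\mathscr{C})\le d(\mathscr{D})$, then $\delta=d(\mathscr{C})$.
   Context: $\zeta=e^{2\pi i/p}$; $\operatorname{tr}:\mathbb{F}_q\to\mathbb{F}_p$ the trace. $\mathcal{L}(\mathscr{C},\mathbb{F}_p)$ is the space of $\mathbb{F}_p$-linear maps $\mathscr{C}\to\mathbb{F}_p$. $\phi_\lambda=q^{-k/2}\sum_{\mathbf{c}\in\mathscr{C}}\zeta^{f_\lambda(\mathbf{c})}|\mathbf{c}\rangle$, $\Phi_\Lambda=\phi_{\lambda_1}\otimes\cdots\otimes\phi_{\lambda_m}$ in $(\mathbb{C}^q)^{\otimes nm}$ (orthonormal basis $|\mathbf{x}\rangle$, $\mathbf{x}\in\mathbb{F}_q^{nm}$). $d(\mathscr{C})$, $d(\mathscr{D})$ are minimum Hamming distances. Errors: $X(a)|x\rangle=|x+a\rangle$,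 $Z(b)|x\rangle=\zeta^{\operatorname{tr}(bx)}|x\rangle$, tensored to $X(\mathbf{a}),Z(\mathbf{b})$; error group $\mathcal{P}_{nm}=\{\omega^cX(\mathbf{a})Z(\mathbf{b})\}$ with $\omega=\zeta,c\in\mathbb{F}_p$ ($p$ odd) or $\omega=i,c\in\{0,1,2,3\}$ ($p=2$); weight of $\omega^cX(\mathbf{a})Z(\mathbf{b})$ is $\#\{j:(a_j,b_j)\ne(0,0)\}$. With $\mathcal{S}=\{E\in\mathcal{P}_{nm}:Ev=v\ \forall v\in Q\}$, $Q$ is a stabilizer code (i.e. $Q$ is the common fixed space of $\mathcal{S}$), and its minimum distance is $\delta=\min\{\operatorname{wt}(E):E\in C_{\mathcal{P}_{nm}}(\mathcal{S})\setminus\mathcal{S}\mathcal{Z}(\mathcal{P}_{nm})\}$, where $\mathcal{Z}(\mathcal{P}_{nm})$ is the set of scalar elements. *)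

(* Defs.v *)
From HB Require Import structures.
From mathcomp Require Import all_boot all_order all_algebra all_field.
Import Order.TTheory GRing.Theory Num.Theory.
Local Open Scope ring_scope.

Definition hw {E : zmodType} {n : nat} (v : 'rV[E]_n) : nat :=
  #|[set i : 'I_n | v 0 i != 0]|.

Definition dmin {E : finFieldType} {n : nat} (C : {vspace 'rV[E]_n}) : nat :=
  \big[minn/n]_(c : 'rV[E]_n | (c \in C) && (c != 0)) hw c.

(* Absolute trace F_q -> F_p, q = p^r: the unique t in F_p whose image in F
   is sum_{i<r} x^(p^i). *)
Definition trF {F : finFieldType} (p r : nat) (x : F) : 'F_p :=
  odflt 0 [pick t : 'F_p | ((val t)%:R : F) == \sum_(i < r) x ^+ (p ^ i)].

(* zeta = e^{2 pi i / p} in the algebraic complex numbers: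
   p.-root (-1) is e^{i pi / p} (root of minimal nonnegative argument). *)
Definition zeta (p : nat) : algC := (p.-root (-1)) ^+ 2.
Definition omega (p : nat) : algC := if p == 2%N then 'i else zeta p.

(* phi_lambda evaluated at the basis vector |c>, with f = f_lambda. *)
Definition phi {F : finFieldType} (p : nat) {n : nat} (k : nat) (C : {vspace 'rV[F]_n})
    (f : 'rV[F]_n -> 'F_p) (c : 'rV[F]_n) : algC :=
  if c \in C then (sqrtC ((#|F| ^ k)%:R))^-1 * zeta p ^+ val (f c) else 0.

(* Phi_Lambda evaluated at |x>, x in F_q^{nm}, written as an m x n matrix
   whose j-th row is the j-th tensor block. *)
Definition Phi {F K : finFieldType} (p : nat) {n : nat} (k : nat) {m : nat} (C : {vspace 'rV[F]_n})
    (kappa : K -> 'rV[F]_n -> 'F_p) (L : 'rV[K]_m) (x : 'M[F]_(m, n)) : algC :=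
  \prod_(j < m) phi p k C (kappa (L 0 j)) (row j x).

Definition inQ {F K : finFieldType} (p : nat) {n : nat} (k : nat) {m : nat} (C : {vspace 'rV[F]_n})
    (D : {vspace 'rV[K]_m}) (kappa : K -> 'rV[F]_n -> 'F_p)
    (v : 'M[F]_(m, n) -> algC) : Prop :=
  exists a : 'rV[K]_m -> algC,
    forall x, v x = \sum_(L : 'rV[K]_m | L \in D) a L * Phi p k C kappa L x.

Definition trdot {F : finFieldType} (p r : nat) {m n : nat} (b x : 'M[F]_(m, n)) : 'F_p :=
  \sum_(j < m) \sum_(l < n) trF p r (b j l * x j l).

(* The Pauli operator omega^c X(a) Z(b) acting on a vector v
   (X(a) Z(b) |x> = zeta^{tr(b.x)} |x + a>). *)
Definition pauli {F : finFieldType} (p r : nat) {m n : nat} (c : nat) (a b : 'M[F]_(m, n))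
    (v : 'M[F]_(m, n) -> algC) : 'M[F]_(m, n) -> algC :=
  fun y => omega p ^+ c * zeta p ^+ val (trdot p r b (y - a)) * v (y - a).

Definition pwt {F : finFieldType} {m n : nat} (a b : 'M[F]_(m, n)) : nat :=
  #|[set ij : 'I_m * 'I_n | (a ij.1 ij.2 != 0) || (b ij.1 ij.2 != 0)]|.

Section Stab.
Variables (F K : finFieldType) (p r n k m : nat) (C : {vspace 'rV[F]_n})
  (D : {vspace 'rV[K]_m}) (kappa : K -> 'rV[F]_n -> 'F_p).

Definition inS (c : nat) (a b : 'M[F]_(m, n)) : Prop :=
  forall v, inQ p k C D kappa v -> forall y, pauli p r c a b v y = v y.

Definition inCent (c : nat) (a b : 'M[F]_(m, n)) : Prop :=
  forall c' a' b', inS c' a' b' ->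
    forall v y, pauli p r c a b (pauli p r c' a' b' v) y
              = pauli p r c' a' b' (pauli p r c a b v) y.

(* omega^c X(a) Z(b) is in S Z(P) (Z(P) = scalars omega^c'' I) *)
Definition inSZ (c : nat) (a b : 'M[F]_(m, n)) : Prop :=
  exists c' a' b' c'', inS c' a' b' /\
    forall v y, pauli p r c a b v y = pauli p r c' a' b' (pauli p r c'' 0 0 v) y.
End Stab.
Arguments inS {F K} p r {n} k {m} C D kappa c a b.
Arguments inCent {F K} p r {n} k {m} C D kappa c a b.
Arguments inSZ {F K} p r {n} k {m} C D kappa c a b.

(* Main.v *)
Require Import Defs.
From HB Require Import structures.
From mathcomp Require Import all_boot all_order all_algebra all_field.
From mathcomp Require Import zify ring.
Import Order.TTheory GRing.Theory Num.Theory.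
Local Open Scope ring_scope.


Lemma shift_sum (G : finZmodType) (Gp : pred G) (f : G -> algC) (g0 : G) :
  (forall x y, Gp x -> Gp y -> Gp (x - y)) -> Gp 0 -> Gp g0 ->
  (forall g, Gp g -> f (g + g0) = f g * f g0) -> f g0 != 1 ->
  \sum_(g | Gp g) f g = 0.
Proof.
move=> hB h0 hg0 hf hne.
have hN x : Gp x -> Gp (- x) by move=> hx; rewrite -sub0r hB.
have hD x y : Gp x -> Gp y -> Gp (x + y).
  by move=> hx hy; rewrite -[y]opprK hB // hN.
have E : \sum_(g | Gp g) f g = (\sum_(g | Gp g) f g) * f g0.
  have hE g : Gp (g + g0) = Gp g.
    apply/idP/idP => h; last exact: hD.
    by rewrite -(addrK g0 g); apply: hB.
  rewrite [LHS](reindex_inj (addIr g0)) /= mulr_suml.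
  by apply: eq_big => g; rewrite hE // => hg; rewrite hf.
apply/eqP; move: E => /eqP; rewrite -subr_eq0 -{1}(mulr1 (\sum_(g | Gp g) f g)).
rewrite -mulrBr mulf_eq0 subr_eq0 => /orP [//|/eqP h].
by move: hne; rewrite -h eqxx.
Qed.

Section Zeta.
Variable p : nat.
Hypothesis hp : prime p.

Let p_gt0 : (0 < p)%N. Proof. exact: prime_gt0. Qed.

Lemma wp : (p.-root (-1 : algC)) ^+ p = -1.
Proof. by rewrite rootCK. Qed.

Lemma zeta_p : zeta p ^+ p = 1.
Proof. by rewrite /zeta exprAC wp sqrrN expr1n. Qed.

Lemma zeta_neq1 : zeta p != 1.
Proof.
have hN : (-1 : algC) != 1 by rewrite lt_eqF // (lt_trans (ltrN10 _) ltr01).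
have [p2|pn2] := eqVneq p 2%N.
  by rewrite /zeta p2 rootCK.
rewrite /zeta sqrf_eq1; apply/negP => /orP[] /eqP hw.
  by move: wp; rewrite hw expr1n => /eqP; rewrite eq_sym (negbTE hN).
have [z hz] : {z : algC | (p.*2).-primitive_root z}.
  by apply: C_prim_root_exists; rewrite double_gt0.
have zp : z ^+ p = -1.
  have : (z ^+ p) ^+ 2 == 1 by rewrite -exprM muln2 (prim_expr_order hz).
  rewrite sqrf_eq1 => /orP[|/eqP //].
  by rewrite -(prim_order_dvd hz) -muln2 -{2}(muln1 p) dvdn_pmul2l // dvdn1.
pose y := if 0 <= 'Im z then z else z^*.
have yp : y ^+ p = -1.
  rewrite /y; case: ifP => // _; by rewrite -rmorphXn zp rmorphN1.
have yI : 0 <= 'Im y.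
  rewrite /y; case: ifP => // h; rewrite Im_conj oppr_ge0.
  by move: (Creal_Im z); rewrite realE h.
have hRe := rootC_Re_max p_gt0 yp yI.
rewrite hw in hRe.
have ReN1 : 'Re (-1 : algC) = -1 by apply/Creal_ReP; rewrite rpredN rpred1.
rewrite ReN1 in hRe.
have ny : `|y| = 1.
  apply/eqP; rewrite -(pexpr_eq1 p_gt0) ?normr_ge0 // -normrX yp normrN normr1.
  done.
have y1 : y = -1.
  have := leif_Re_Creal (- y).
  case=> hle; rewrite normrN ny.
  have hre : 'Re (- y) = 1.
    apply/eqP; rewrite eq_le; rewrite normrN ny in hle; rewrite hle /=.
    by rewrite raddfN /= lerNr.
  rewrite hre eqxx => /esym h0.
  have := ger0_norm h0; rewrite normrN ny => h1.
  by rewrite -[y]opprK -h1.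
have z1 : z = -1.
  move: y1; rewrite /y; case: ifP => // _ /(congr1 Num.conj).
  by rewrite conjCK rmorphN1.
have : z ^+ 2 == 1 by rewrite z1 sqrrN expr1n.
rewrite -(prim_order_dvd hz) => /dvdn_leq => /(_ isT).
have := prime_gt1 hp; rewrite -!muln2; lia.
Qed.

Lemma zeta_prim : p.-primitive_root (zeta p).
Proof.
have [m hm hmd] := prim_order_exists p_gt0 zeta_p.
have := hp; case/primeP => _ /(_ m hmd) /orP[/eqP m1|/eqP mp]; last first.
  by move: hm; rewrite mp.
have := prim_expr_order hm; rewrite m1 expr1 => h.
by move: zeta_neq1; rewrite h eqxx.
Qed.

Lemma zeta_eq1 j : (zeta p ^+ j == 1) = (p %| j)%N.
Proof. by rewrite (prim_order_dvd zeta_prim). Qed.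

Lemma valFp_lt (t : 'F_p) : (nat_of_ord t < p)%N.
Proof. case: t => v hv /=; move: hv; by rewrite Fp_cast. Qed.

Lemma zetaF_eq1 (t : 'F_p) : zeta p ^+ val t = 1 -> t = 0.
Proof.
move/eqP; rewrite zeta_eq1 => hd.
suff h : val t = 0%N by apply: val_inj.
have h1 : (val t < p)%N := valFp_lt t.
move: (val t) hd h1 => [|v] // hd hlt.
have := dvdn_leq (ltn0Sn v) hd; lia.
Qed.

Lemma zetaD (s t : 'F_p) : zeta p ^+ val (s + t) = zeta p ^+ val s * zeta p ^+ val t.
Proof.
rewrite -exprD /= -[in RHS](expr_mod _ zeta_p); congr (_ ^+ _).
by move: (nat_of_ord s + nat_of_ord t)%N => v; rewrite Fp_cast.
Qed.

Lemma zetaN (t : 'F_p) : zeta p ^+ val (- t) * zeta p ^+ val t = 1.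
Proof. by rewrite -zetaD addNr. Qed.

Lemma zeta_neq0 j : zeta p ^+ j != 0.
Proof.
apply: expf_neq0; apply/eqP => h; move: zeta_p; rewrite h expr0n eqn0Ngt p_gt0 /=.
by move/eqP; rewrite eq_sym oner_eq0.
Qed.

Lemma zeta_sum (I : Type) (r : seq I) (P : pred I) (f : I -> 'F_p) :
  \prod_(i <- r | P i) zeta p ^+ val (f i) = zeta p ^+ val (\sum_(i <- r | P i) f i).
Proof.
elim/big_rec2: _ => [|i x y _ ->]; first by rewrite expr0.
by rewrite zetaD.
Qed.


Lemma char_dual (V W : finZmodType) (P : V -> W -> 'F_p) (Dp : pred V) (Wp : pred W) :
  Dp 0 -> (forall x y, Dp x -> Dp y -> Dp (x - y)) ->
  Wp 0 -> (forall a b, Wp a -> Wp b -> Wp (a - b)) ->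
  (forall x y a, Wp a -> P (x + y) a = P x a + P y a) ->
  (forall x a b, Wp a -> Wp b -> P x (a + b) = P x a + P x b) ->
  (forall x, x != 0 -> exists2 a, Wp a & P x a != 0) ->
  forall M, (forall a, Wp a -> (forall x, Dp x -> P x a = 0) -> P M a = 0) -> Dp M.
Proof.
move=> hD0 hDB hW0 hWB hP1 hP2 hnd M hM.
case hDM : (Dp M) => //; exfalso.
pose chi x a := zeta p ^+ val (P x a).
have chi0 x a : P x a = 0 -> chi x a = 1 by rewrite /chi => ->; rewrite expr0.
pose X := \sum_(a | Wp a) \sum_(x | Dp x) chi x a * chi M a.
pose N := \sum_(x | Dp x) (1 : algC).
have X1 : X = \sum_(a | Wp a) (if [forall x, Dp x ==> (P x a == 0)] then N else 0).
  apply: eq_bigr => a ha; case: ifP => [/forallP h|/negbT h].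
    apply: eq_bigr => x hx; rewrite !chi0 ?mulr1 //.
      by apply: hM => // y hy; apply/eqP; move/implyP: (h y); apply.
    by apply/eqP; move/implyP: (h x); apply.
  move/forallPn: h => [x0]; rewrite negb_imply => /andP[hx0 hP0].
  rewrite -mulr_suml (@shift_sum _ _ _ x0) ?mul0r //.
    by move=> g hg; rewrite /chi hP1 // zetaD.
  by apply/eqP => /zetaF_eq1 /eqP; rewrite (negbTE hP0).
have X2 : X = 0.
  rewrite /X exchange_big /=; apply: big1 => x hx.
  have hxM : x + M != 0.
    apply/eqP => h; move: hDM; have -> : M = 0 - x by rewrite -h addrC addKr.
    by rewrite hDB.
  have [a0 ha0 hPa0] := hnd _ hxM.
  rewrite (eq_bigr (fun a => chi (x + M) a)); last first.
    by move=> a ha; rewrite /chi hP1 // zetaD.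
  rewrite (@shift_sum _ _ _ a0) //.
    by move=> g hg; rewrite /chi hP2 // zetaD.
  by apply/eqP => /zetaF_eq1 /eqP; rewrite (negbTE hPa0).
have hP0 x : P x 0 = 0.
  by apply: (addrI (P x 0)); rewrite -hP2 // !addr0.
have N0 : N != 0.
  apply/eqP => /psumr_eq0P h.
  have := h (fun _ _ => ler01) 0 hD0; apply/eqP; exact: oner_neq0.
move: X2; rewrite X1 => /psumr_eq0P h.
have hnn : forall a, Wp a -> 0 <= (if [forall x, Dp x ==> (P x a == 0)] then N else 0).
  move=> a _; case: ifP => _ //; apply: sumr_ge0 => x _; exact: ler01.
have := h hnn 0 hW0.
have -> : [forall x, Dp x ==> (P x 0 == 0)].
  by apply/forallP => x; rewrite hP0 eqxx implybT.
by move/eqP; rewrite (negbTE N0).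
Qed.

End Zeta.

Section Trace.
Variables (F : finFieldType) (p r : nat).
Hypothesis hp : prime p.
Hypothesis hF : #|F| = (p ^ r)%N.

Let charF : p \in [pchar F]. Proof. exact: card_finPcharP hF hp. Qed.



Definition Tr (x : F) := \sum_(i < r) x ^+ (p ^ i).

Lemma expDp i (x y : F) : (x + y) ^+ (p ^ i) = x ^+ (p ^ i) + y ^+ (p ^ i).
Proof.
apply: exprDn_pchar; rewrite (eq_pnat _ (pcharf_eq charF)).
by rewrite pnatX pnat_id.
Qed.

Lemma TrD x y : Tr (x + y) = Tr x + Tr y.
Proof. by rewrite /Tr -big_split /=; apply: eq_bigr => i _; rewrite expDp. Qed.

Lemma TrP x : Tr x ^+ p = Tr x.
Proof.
have -> : Tr x ^+ p = \sum_(i < r) x ^+ (p ^ i.+1).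
  rewrite -(pFrobenius_autE charF) rmorph_sum; apply: eq_bigr => i _.
  by rewrite -[LHS]/((x ^+ (p ^ i)) ^+ p) -exprM expnS mulnC.
rewrite /Tr; case: r hF => [|r'] hF'; first by rewrite !big_ord0.
rewrite big_ord_recr big_ord_recl /= -hF' expf_card expn0 expr1 addrC; congr (_ + _).
Qed.

Lemma natF_inj (a b : nat) : (a < p)%N -> (b < p)%N -> (a%:R : F) = b%:R -> a = b.
Proof.
wlog ab : a b / (a <= b)%N.
  move=> W ha hb hab; case: (leqP a b) => h; first exact: W.
  by apply/esym/W => //; apply: ltnW.
move=> ha hb hab.
have : (b - a)%:R == 0 :> F by rewrite natrB // hab subrr.
rewrite -(dvdn_pcharf charF) => hd.
case: (posnP (b - a)) => h0; first lia.
have := dvdn_leq h0 hd; lia.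
Qed.

Lemma Tr_in_Fp x : exists t : 'F_p, ((val t)%:R : F) = Tr x.
Proof.
case: (pickP (fun t : 'F_p => ((val t)%:R : F) == Tr x)) => [t /eqP ht|hn].
  by exists t.
exfalso.
pose P : {poly F} := 'X^p - 'X.
pose rs := Tr x :: [seq ((val t)%:R : F) | t <- enum 'F_p].
have p1 := prime_gt1 hp.
have sP : size P = p.+1.
  by rewrite /P size_addl ?size_polyXn // size_opp size_polyX ltnS.
have P0 : P != 0 by rewrite -size_poly_eq0 sP.
have hall : all (root P) rs.
  rewrite /= rootE /P !hornerE TrP subrr eqxx /=.
  apply/allP => z /mapP [t _ ->]; rewrite rootE /P !hornerE.
  by rewrite -[_ ^+ p]/(pFrobenius_aut charF _) pFrobenius_aut_nat subrr.
have huniq : uniq rs.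
  rewrite /= map_inj_uniq ?enum_uniq ?andbT.
    apply/mapP => -[t _ ht]; move: (hn t); by rewrite ht eqxx.
  move=> s t hst; apply: val_inj; apply: natF_inj => //; exact: valFp_lt.
have := max_poly_roots P0 hall huniq.
by rewrite sP /rs /= size_map -cardE card_Fp // ltnn.
Qed.

Lemma trF_spec x : ((val (trF p r x))%:R : F) = Tr x.
Proof.
rewrite /trF; case: pickP => [t /eqP -> //|hn].
by have [t ht] := Tr_in_Fp x; move: (hn t); rewrite ht eqxx.
Qed.

Lemma FpR_inj (s t : 'F_p) : ((val s)%:R : F) = (val t)%:R -> s = t.
Proof. by move=> h; apply: val_inj; apply: natF_inj => //; apply: valFp_lt. Qed.

Lemma FpR_add (s t : 'F_p) : ((val (s + t))%:R : F) = (val s)%:R + (val t)%:R.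
Proof.
rewrite -natrD -[in RHS](GRing.natr_mod_pchar charF) /=; congr (_%:R).
by move: (nat_of_ord s + nat_of_ord t)%N => v; rewrite Fp_cast.
Qed.

Lemma trFD (x y : F) : trF p r (x + y) = trF p r x + trF p r y.
Proof. by apply: FpR_inj; rewrite FpR_add !trF_spec TrD. Qed.

Lemma trF0 : trF p r (0 : F) = 0.
Proof. by apply: (addrI (trF p r (0 : F))); rewrite addr0 -trFD addr0. Qed.

Lemma trF_nz : exists z : F, trF p r z != 0.
Proof.
case: (pickP (fun z : F => trF p r z != 0)) => [z hz|hn]; first by exists z.
exfalso.
have hT z : Tr z = 0.
  by rewrite -trF_spec; move/negbFE/eqP: (hn z) => ->.
have p1 := prime_gt1 hp.
case hr : r => [|r'].
  by have := finRing_gt1 F; rewrite hF hr.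
pose T : {poly F} := \sum_(i < r) 'X^(p ^ i).
have hTz z : T.[z] = Tr z.
  by rewrite /T horner_sum; apply: eq_bigr => i _; rewrite hornerXn.
have sT : (size T <= (p ^ r').+1)%N.
  apply: leq_trans (size_sum _ _ _) _; apply/bigmax_leqP => i _.
  rewrite size_polyXn ltnS leq_pexp2l ?prime_gt0 //.
  by move: (ltn_ord i); move: (nat_of_ord i) => v; rewrite hr ltnS.
have T0 : T != 0.
  apply/eqP => /(congr1 (fun q : {poly F} => q`_1)).
  rewrite /T coef_sum coef0 hr big_ord_recl /= coefXn expn0 eqxx big1.
    by rewrite addr0 => /eqP; rewrite oner_eq0.
  move=> i _; rewrite coefXn /bump /= add1n.
  suff : (1 != p ^ i.+1)%N by move/negbTE => ->.
  have h : (0 < p ^ i)%N by rewrite expn_gt0 prime_gt0.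
  rewrite expnS; nia.
have hall : all (root T) (enum F).
  by apply/allP => z _; rewrite rootE hTz hT.
have := max_poly_roots T0 hall (enum_uniq _).
rewrite -cardE hF hr => h; have := leq_trans h sT.
have h' : (0 < p ^ r')%N by rewrite expn_gt0 prime_gt0.
rewrite expnS; nia.
Qed.

End Trace.
Lemma bigmin_le (T : finType) (P : pred T) (f : T -> nat) (d : nat) x :
  P x -> (\big[minn/d]_(y | P y) f y <= f x)%N.
Proof.
move=> Px; have : x \in index_enum T by rewrite mem_index_enum.
elim: (index_enum T) => // y s IH; rewrite inE big_cons => /orP[/eqP <-|hs].
  by rewrite Px geq_minl.
case: ifP => _; last exact: IH.
by rewrite geq_min IH ?orbT.
Qed.

Lemma bigmin_att (T : finType) (P : pred T) (f : T -> nat) (d : nat) x :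
  (forall y, f y <= d)%N -> P x ->
  exists y, P y /\ \big[minn/d]_(y | P y) f y = f y.
Proof.
move=> hd Px.
have H : forall s : seq T, \big[minn/d]_(y <- s | P y) f y = d \/
    exists y, P y /\ \big[minn/d]_(y <- s | P y) f y = f y.
  elim=> [|y s [IH|[z [Pz IH]]]]; rewrite ?big_nil ?big_cons; first by left.
    case: ifP => Py; last by left.
    by right; exists y; split => //; rewrite IH; apply/minn_idPl.
  case: ifP => Py; last by right; exists z.
  right; rewrite IH; case: (leqP (f y) (f z)) => h.
    by exists y; split => //; apply/minn_idPl.
  by exists z; split => //; apply/minn_idPr/ltnW.
case: (H (index_enum T)) => [e|//].
exists x; split => //; apply/eqP; rewrite eqn_leq bigmin_le //=.
by rewrite e hd.
Qed.

Lemma nz_coord (E : zmodType) (q : nat) (v : 'rV[E]_q) : v != 0 -> exists l, v 0 l != 0.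
Proof.
move=> hv; case: (pickP (fun l => v 0 l != 0)) => [l hl|hn]; first by exists l.
exfalso; move/eqP: hv; apply; apply/rowP => l'; rewrite mxE; apply/eqP.
exact: negbFE (hn l').
Qed.


Section Main.
Variables (p r : nat) (F K : finFieldType) (n k m : nat)
  (C : {vspace 'rV[F]_n}) (D : {vspace 'rV[K]_m})
  (kappa : K -> 'rV[F]_n -> 'F_p).
Hypothesis hp : prime p.
Hypothesis hF : #|F| = (p ^ r)%N.
Hypothesis hkadd : forall lam c1 c2, c1 \in C -> c2 \in C ->
     kappa lam (c1 + c2) = kappa lam c1 + kappa lam c2.
Hypothesis hkl : forall lam mu c, c \in C -> kappa (lam + mu) c = kappa lam c + kappa mu c.
Hypothesis hkinj : forall lam mu, (forall c, c \in C -> kappa lam c = kappa mu c) -> lam = mu.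

Definition inW (x : 'M[F]_(m, n)) : bool := [forall j, row j x \in C].
Definition Pr (L : 'rV[K]_m) (x : 'M[F]_(m, n)) : 'F_p :=
  \sum_(j < m) kappa (L 0 j) (row j x).
Definition nrm : algC := (sqrtC ((#|F| ^ k)%:R))^-1.

Lemma rowD' (j : 'I_m) (x y : 'M[F]_(m, n)) : row j (x + y) = row j x + row j y.
Proof. by apply/rowP => l; rewrite !mxE. Qed.
Lemma rowB' (j : 'I_m) (x y : 'M[F]_(m, n)) : row j (x - y) = row j x - row j y.
Proof. by apply/rowP => l; rewrite !mxE. Qed.
Lemma row0' (j : 'I_m) : row j (0 : 'M[F]_(m, n)) = 0.
Proof. by apply/rowP => l; rewrite !mxE. Qed.

Lemma k0 lam : kappa lam 0 = 0.
Proof. by apply: (addrI (kappa lam 0)); rewrite -hkadd ?mem0v // !addr0. Qed.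

Lemma kl0 c : c \in C -> kappa 0 c = 0.
Proof. by move=> hc; apply: (addrI (kappa 0 c)); rewrite -hkl // !addr0. Qed.

Lemma inW0 : inW 0.
Proof. by apply/forallP => j; rewrite row0' mem0v. Qed.

Lemma inWB x y : inW x -> inW y -> inW (x - y).
Proof.
move=> /forallP hx /forallP hy; apply/forallP => j.
by rewrite rowB' memvB.
Qed.

Lemma inWD x y : inW x -> inW y -> inW (x + y).
Proof.
move=> /forallP hx /forallP hy; apply/forallP => j.
by rewrite rowD' memvD.
Qed.

Lemma inWN x : inW x -> inW (- x).
Proof. by move=> hx; rewrite -sub0r inWB // inW0. Qed.

Lemma PrD1 L1 L2 x : inW x -> Pr (L1 + L2) x = Pr L1 x + Pr L2 x.
Proof.
move/forallP => hx; rewrite /Pr -big_split /=; apply: eq_bigr => j _.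
by rewrite mxE hkl.
Qed.

Lemma PrD2 L x y : inW x -> inW y -> Pr L (x + y) = Pr L x + Pr L y.
Proof.
move=> /forallP hx /forallP hy; rewrite /Pr -big_split /=; apply: eq_bigr => j _.
by rewrite rowD' hkadd.
Qed.

Lemma Pr0r L : Pr L 0 = 0.
Proof. by rewrite /Pr big1 // => j _; rewrite row0' k0. Qed.

Lemma Pr0l x : inW x -> Pr 0 x = 0.
Proof. by move/forallP => hx; rewrite /Pr big1 // => j _; rewrite mxE kl0. Qed.

Lemma Phi_eq L x : Phi p k C kappa L x =
  if inW x then nrm ^+ m * zeta p ^+ val (Pr L x) else 0.
Proof.
rewrite /Phi; case: ifP => [/forallP hx | /negbT /forallPn [j hj]].
  rewrite (eq_bigr (fun j => nrm * zeta p ^+ val (kappa (L 0 j) (row j x)))).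
    by rewrite big_split /= prodr_const card_ord zeta_sum.
  by move=> j _; rewrite /phi hx.
by rewrite (bigD1 j) //= /phi (negbTE hj) mul0r.
Qed.

Lemma nrm_neq0 : nrm ^+ m != 0.
Proof.
apply: expf_neq0; rewrite /nrm invr_eq0 sqrtC_eq0 pnatr_eq0 -lt0n expn_gt0.
by rewrite hF expn_gt0 prime_gt0.
Qed.

Lemma inQ_Phi L : L \in D -> inQ p k C D kappa (Phi p k C kappa L).
Proof.
move=> hL; exists (fun L' => (L' == L)%:R) => x.
rewrite (bigD1 L) //= eqxx mul1r big1 ?addr0 // => L' /andP[_ hne].
by rewrite (negbTE hne) mul0r.
Qed.

Lemma inQ_supp v : inQ p k C D kappa v -> forall x, ~~ inW x -> v x = 0.
Proof.
move=> [al hv] x hx; rewrite hv big1 // => L _.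
by rewrite Phi_eq (negbTE hx) mulr0.
Qed.

Lemma trdot0r (b : 'M[F]_(m, n)) : trdot p r b 0 = 0.
Proof. by rewrite /trdot big1 // => j _; rewrite big1 // => l _; rewrite mxE mulr0 trF0. Qed.

Lemma trdot0l (x : 'M[F]_(m, n)) : trdot p r 0 x = 0.
Proof. by rewrite /trdot big1 // => j _; rewrite big1 // => l _; rewrite mxE mul0r trF0. Qed.

Lemma trdotD (b x y : 'M[F]_(m, n)) : trdot p r b (x + y) = trdot p r b x + trdot p r b y.
Proof.
rewrite /trdot -big_split /=; apply: eq_bigr => j _.
by rewrite -big_split /=; apply: eq_bigr => l _; rewrite mxE mulrDr trFD.
Qed.


Lemma val0F : val (0 : 'F_p) = 0%N. Proof. by []. Qed.

Lemma omega_neq0 c : omega p ^+ c != 0.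
Proof. apply: expf_neq0; rewrite /omega; case: ifP => _; [exact: neq0Ci | exact: (@zeta_neq0 p hp 1)]. Qed.

Lemma S_props c a b : inS p r k C D kappa c a b ->
  [/\ inW a, omega p ^+ c = 1, (forall z, inW z -> trdot p r b z = 0)
    & (forall L, L \in D -> Pr L a = 0)].
Proof.
move=> hS.
have hPhi L y : L \in D -> omega p ^+ c * zeta p ^+ val (trdot p r b (y - a))
   * Phi p k C kappa L (y - a) = Phi p k C kappa L y.
  by move=> hL; have := hS _ (inQ_Phi L hL) y.
have N0 := nrm_neq0.
have h0 := hPhi 0 a (mem0v D).
rewrite subrr trdot0r val0F expr0 mulr1 !Phi_eq inW0 Pr0r val0F expr0 mulr1 in h0.
have ha : inW a.
  case: ifP h0 => // _ /eqP; rewrite mulf_eq0 (negbTE N0) (negbTE (omega_neq0 c)).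
  by [].
rewrite ha Pr0l // val0F expr0 mulr1 in h0.
have hw : omega p ^+ c = 1.
  by apply: (mulIf N0); rewrite mul1r.
split => //.
  move=> z hz; have h := hPhi 0 (a + z) (mem0v D).
  rewrite (addrC a z) addrK !Phi_eq hz inWD // !Pr0l ?inWD // val0F expr0 mulr1 hw mul1r in h.
  by apply: (zetaF_eq1 p hp); apply: (mulIf N0); rewrite mul1r.
move=> L hL; have h := hPhi L a hL.
rewrite subrr trdot0r val0F expr0 mulr1 hw mul1r !Phi_eq inW0 ha Pr0r val0F expr0 mulr1 in h.
apply: (zetaF_eq1 p hp); apply/esym; apply: (mulfI N0); by rewrite mulr1.
Qed.

Lemma S_intro a b : inW a -> (forall L, L \in D -> Pr L a = 0) ->
  (forall z, inW z -> trdot p r b z = 0) -> inS p r k C D kappa 0 a b.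
Proof.
move=> ha hPa hb v hv y; have [al hal] := hv.
rewrite /pauli expr0 mul1r !hal mulr_sumr; apply: eq_bigr => L hL.
rewrite mulrCA; congr (_ * _).
rewrite !Phi_eq; case hy : (inW y).
  have hya : inW (y - a) by rewrite inWB.
  rewrite hya hb // val0F expr0 mul1r.
  have e : Pr L y = Pr L (y - a).
    by have := PrD2 L _ _ hya ha; rewrite subrK hPa // addr0.
  by rewrite e.
have -> : inW (y - a) = false.
  by apply/negbTE/negP => h; move: hy; have := inWD _ _ h ha; rewrite subrK => ->.
by rewrite mulr0.
Qed.

Lemma comm_lemma c a b c' a' b' : inCent p r k C D kappa c a b ->
  inS p r k C D kappa c' a' b' ->
  zeta p ^+ val (trdot p r b a') = zeta p ^+ val (trdot p r b' a).
Proof.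
move=> hC hS; have := hC c' a' b' hS (fun x => ((x == 0) : nat)%:R) (a + a').
rewrite /pauli.
have e1 : a + a' - a = a' by rewrite addrAC subrr add0r.
have e2 : a + a' - a' = a by rewrite addrK.
rewrite e1 e2 !subrr !trdot0r !val0F !expr0 !mulr1 eqxx mulr1.
move=> h; apply: (mulfI (omega_neq0 c)); apply: (mulfI (omega_neq0 c')).
rewrite mulr1 in h.
transitivity (omega p ^+ c * zeta p ^+ val (trdot p r b a') * omega p ^+ c'); first ring.
rewrite h; ring.
Qed.


Hypothesis hksurj : forall g : 'rV[F]_n -> 'F_p,
     (forall c1 c2, c1 \in C -> c2 \in C -> g (c1 + c2) = g c1 + g c2) ->
     exists lam, forall c, c \in C -> kappa lam c = g c.

Definition single (j : 'I_m) (c : 'rV[F]_n) : 'M[F]_(m, n) :=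
  \matrix_(j', l) if j' == j then c 0 l else 0.

Lemma row_single j c j' : row j' (single j c) = if j' == j then c else 0.
Proof. by apply/rowP => l; rewrite !mxE; case: (j' == j); rewrite ?mxE. Qed.

Lemma inW_single j c : c \in C -> inW (single j c).
Proof. by move=> hc; apply/forallP => j'; rewrite row_single; case: ifP; rewrite ?mem0v. Qed.

Lemma Pr_single L j c : Pr L (single j c) = kappa (L 0 j) c.
Proof.
rewrite /Pr (bigD1 j) //= row_single eqxx big1 ?addr0 // => j' hj'.
by rewrite row_single (negbTE hj') k0.
Qed.

Lemma hw_row_le (a b : 'M[F]_(m, n)) j : (hw (row j a) <= pwt a b)%N.
Proof.
rewrite /hw /pwt -(card_imset _ (f := fun l => (j, l))); last first.
  by move=> l1 l2 [].
apply: subset_leq_card; apply/subsetP => x /imsetP [l]; rewrite !inE mxE => hl ->.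
by rewrite /= hl.
Qed.

Lemma trF_func (c0 : 'rV[F]_n) : c0 \in C -> c0 != 0 -> exists lam, kappa lam c0 != 0.
Proof.
move=> hC0 hc0.
have [l hl] : exists l, c0 0 l != 0.
  case: (pickP (fun l => c0 0 l != 0)) => [l hl|hn]; first by exists l.
  exfalso; move/eqP: hc0; apply; apply/rowP => l'; rewrite mxE; apply/eqP.
  exact: negbFE (hn l').
have [z hz] := @trF_nz F p r hp hF.
pose g (c : 'rV[F]_n) := trF p r (z / c0 0 l * c 0 l).
have [|lam hlam] := @hksurj g.
  by move=> c1 c2 _ _; rewrite /g mxE mulrDr trFD.
exists lam; rewrite hlam // /g divfK //.
Qed.

Lemma part1 (i : 'I_m) (c0 : 'rV[F]_n) : c0 \in C -> c0 != 0 ->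
  (exists2 d, d \in D & d 0 i = 1) ->
  [/\ inCent p r k C D kappa 0 (single i c0) 0,
      ~ inSZ p r k C D kappa 0 (single i c0) 0
    & pwt (single i c0) 0 = hw c0].
Proof.
move=> hc0 hnz [d hd hdi]; set A0 := single i c0.
have hA0 : inW A0 := inW_single i c0 hc0.
split.
- move=> c' a' b' hS v y; have [ha' hw' hb' _] := S_props _ _ _ hS.
  rewrite /pauli !trdot0l val0F !expr0 !mul1r.
  have e : y - A0 - a' = y - a' - A0 by rewrite addrAC.
  rewrite e; congr (_ * _ * _); congr (_ ^+ val _).
  by rewrite trdotD (hb' (- A0)) ?inWN // addr0.
- move=> [c' [a' [b' [c'' [hS heq]]]]].
  have [ha' _ _ hPa'] := S_props _ _ _ hS.
  have := heq (fun x => ((x == 0) : nat)%:R) A0.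
  rewrite /pauli subrr eqxx !subr0 !trdot0l val0F !expr0 !mulr1.
  case: (eqVneq a' A0) => [ea|hne]; last first.
    have hne' : A0 - a' != 0 by rewrite subr_eq0 eq_sym.
    rewrite (negbTE hne') /= mulr0 => /eqP.
    by rewrite mulr0 oner_eq0.
  move=> _.
  have [mu hmu] := trF_func c0 hc0 hnz.
  have := hPa' (mu *: d) (memvZ mu hd).
  rewrite ea /A0 Pr_single mxE hdi mulr1 => h.
  by rewrite h eqxx in hmu.
- rewrite /pwt /hw.
  transitivity #|[set (i, l) | l in [set l | c0 0 l != 0]]|; last first.
    by apply: card_imset => l1 l2 [].
  apply: eq_card => -[j l]; rewrite !inE /= !mxE eqxx orbF.
  case: (eqVneq j i) => [->|hji].
    by rewrite mem_imset ?inE // => l1 l2 [].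
  rewrite eqxx; symmetry; apply/negP => /imsetP [l' _ [hj _]].
  by rewrite hj eqxx in hji.
Qed.

Definition Pt (x u : 'rV[F]_n) : 'F_p := \sum_(l < n) trF p r (x 0 l * u 0 l).

Lemma trdot_single j u z : trdot p r (single j u) z = Pt (row j z) u.
Proof.
rewrite /trdot (bigD1 j) //= [X in _ + X]big1 ?addr0.
  by apply: eq_bigr => l _; rewrite !mxE eqxx mulrC.
move=> j' hj'; apply: big1 => l _; rewrite !mxE (negbTE hj') mul0r trF0 //.
Qed.

Lemma rows_inC c a b : inCent p r k C D kappa c a b -> forall j, row j a \in C.
Proof.
move=> hC j.
apply: (@char_dual p hp _ _ Pt (fun x => x \in C) predT _ _ _ _ _ _ _ (row j a)).
- exact: mem0v.
- by move=> x y hx hy; rewrite memvB.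
- by [].
- by [].
- move=> x y u _; rewrite /Pt -big_split /=; apply: eq_bigr => l _.
  by rewrite mxE mulrDl trFD.
- move=> x u v _ _; rewrite /Pt -big_split /=; apply: eq_bigr => l _.
  by rewrite mxE mulrDr trFD.
- move=> x /nz_coord [l hl].
  have [z hz] := @trF_nz F p r hp hF.
  exists (\row_l' (if l' == l then z / x 0 l else 0)) => //.
  rewrite /Pt (bigD1 l) //= mxE eqxx mulrC divfK // big1 ?addr0 //.
  by move=> l' hl'; rewrite mxE (negbTE hl') mulr0 trF0.
- move=> u _ hu.
  have hS : inS p r k C D kappa 0 0 (single j u).
    apply: S_intro; first exact: inW0.
      by move=> L _; rewrite Pr0r.
    move=> z /forallP hz; rewrite trdot_single.
    by apply: hu.
  have := comm_lemma _ _ _ _ _ _ hC hS.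
  rewrite trdot0r val0F expr0 trdot_single => /esym h.
  by have := zetaF_eq1 p hp _ h.
Qed.

Lemma hw_le_n (E : zmodType) (v : 'rV[E]_n) : (hw v <= n)%N.
Proof. by rewrite /hw; apply: leq_trans (max_card _) _; rewrite card_ord. Qed.

Lemma part2 c a b : inCent p r k C D kappa c a b -> ~ inSZ p r k C D kappa c a b ->
  (dmin C <= dmin D)%N -> (dmin C <= pwt a b)%N.
Proof.
move=> hC hnSZ hCD.
have rC := rows_inC _ _ _ hC.
case: (eqVneq a 0) => [a0|anz].
  2: {
  have [j hj] : exists j, row j a != 0.
    case: (pickP (fun j => row j a != 0)) => [j hj|hn]; first by exists j.
    exfalso; move/eqP: anz; apply; apply/matrixP => j l; rewrite mxE.
    by move/negbFE/eqP/rowP/(_ l): (hn j); rewrite !mxE.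
  apply: leq_trans (hw_row_le a b j).
  by apply: bigmin_le; rewrite rC hj. }
subst a.
case hall : [forall z, inW z ==> (trdot p r b z == 0)].
  exfalso; apply: hnSZ; exists 0%N, 0, b, c; split.
    apply: S_intro; first exact: inW0.
      by move=> L _; rewrite Pr0r.
    by move=> z hz; apply/eqP; move/forallP/(_ z): hall; rewrite hz.
  move=> v y; rewrite /pauli !subr0 trdot0l val0F !expr0 !mul1r; ring.
move/negbT/forallPn: hall => [z0]; rewrite negb_imply => /andP [hz0 hbz0].
pose g (j : 'I_m) (c : 'rV[F]_n) := \sum_(l < n) trF p r (b j l * c 0 l).
have : forall j, exists mu, forall c, c \in C -> kappa mu c = g j c.
  move=> j; apply: hksurj => c1 c2 _ _; rewrite /g -big_split /=.
  by apply: eq_bigr => l _; rewrite mxE mulrDr trFD.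
move/fin_all_exists => [mu hmu].
pose M := \row_j mu j.
have PrM z : inW z -> Pr M z = trdot p r b z.
  move/forallP => hz; rewrite /Pr /trdot; apply: eq_bigr => j _.
  by rewrite mxE hmu // /g; apply: eq_bigr => l _; rewrite mxE.
have MD : M \in D.
  apply: (@char_dual p hp _ _ Pr (fun x => x \in D) inW _ _ _ _ _ _ _ M).
  - exact: mem0v.
  - by move=> x y hx hy; rewrite memvB.
  - exact: inW0.
  - exact: inWB.
  - by move=> x y u hu; rewrite PrD1.
  - by move=> x u v hu hv; rewrite PrD2.
  - move=> L /nz_coord [j hj].
    case: (pickP (fun c => (c \in C) && (kappa (L 0 j) c != 0))) => [c1 /andP [hc hk]|hn].
      by exists (single j c1); [apply: inW_single | rewrite Pr_single].
    exfalso; move/eqP: hj; apply; apply: hkinj => c1 hc.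
    rewrite kl0 //; apply/eqP; move: (hn c1); rewrite hc /=.
    by move/negbFE.
  - move=> a' ha' hPa'.
    have hS : inS p r k C D kappa 0 a' 0.
      by apply: S_intro => // z _; rewrite trdot0l.
    have := comm_lemma _ _ _ _ _ _ hC hS.
    rewrite trdot0r val0F expr0 PrM // => h.
    exact: zetaF_eq1 p hp _ h.
have Mnz : M != 0.
  by apply/eqP => hM; move: hbz0; rewrite -PrM // hM Pr0l.
apply: (leq_trans hCD).
apply: (leq_trans (bigmin_le _ _ _ _ M _)); first by rewrite MD Mnz.
rewrite /hw /pwt.
apply: leq_trans (leq_imset_card fst _).
apply: subset_leq_card; apply/subsetP => j; rewrite inE mxE => hj.
have [l hl] : exists l, b j l != 0.
  case: (pickP (fun l => b j l != 0)) => [l hl|hn]; first by exists l.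
  exfalso; move/eqP: hj; apply; apply: hkinj => c1 hc.
  rewrite kl0 // hmu // /g big1 // => l _.
  by move/negbFE/eqP: (hn l) => ->; rewrite mul0r trF0.
apply/imsetP; exists (j, l) => //.
by rewrite inE /= mxE eqxx /= hl.
Qed.

End Main.

Theorem corollary3p4
  (p r : nat) (F K : finFieldType) (n k m s : nat)
  (C : {vspace 'rV[F]_n}) (D : {vspace 'rV[K]_m})
  (kappa : K -> 'rV[F]_n -> 'F_p) :
  prime p ->
  #|F| = (p ^ r)%N ->
  #|K| = ((p ^ r) ^ k)%N ->
  \dim C = k -> (1 <= k < n)%N ->
  \dim D = s -> (1 <= s < m)%N ->
  (forall i : 'I_m, exists2 d : 'rV[K]_m, d \in D & d 0 i = 1) ->
  (* each f_lambda = kappa lambda is F_p-linear (additive) on C *)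
  (forall lam c1 c2, c1 \in C -> c2 \in C ->
     kappa lam (c1 + c2) = kappa lam c1 + kappa lam c2) ->
  (* kappa is F_p-linear (additive) *)
  (forall lam mu c, c \in C -> kappa (lam + mu) c = kappa lam c + kappa mu c) ->
  (* kappa is injective *)
  (forall lam mu, (forall c, c \in C -> kappa lam c = kappa mu c) -> lam = mu) ->
  (* kappa is surjective onto L(C, F_p) *)
  (forall g : 'rV[F]_n -> 'F_p,
     (forall c1 c2, c1 \in C -> c2 \in C -> g (c1 + c2) = g c1 + g c2) ->
     exists lam, forall c, c \in C -> kappa lam c = g c) ->
  (dmin C <= dmin D)%N ->
  (exists (c : nat) (a b : 'M[F]_(m, n)),
      inCent p r k C D kappa c a b /\ ~ inSZ p r k C D kappa c a b /\
      pwt a b = dmin C) /\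
  (forall (c : nat) (a b : 'M[F]_(m, n)),
      inCent p r k C D kappa c a b -> ~ inSZ p r k C D kappa c a b ->
      (dmin C <= pwt a b)%N).
Proof.
move=> hp hF hK hdC hk hdD hs hd1 hkadd hkl hkinj hksurj hCD.
have hm : (0 < m)%N by lia.
pose i := Ordinal hm.
have [c1 [hc1 hc1nz]] : exists c, c \in C /\ c != 0.
  exists (vpick C); split; first exact: memv_pick.
  by rewrite vpick0 -dimv_eq0 hdC; lia.
have hle : forall y : 'rV[F]_n, (hw y <= n)%N by move=> y; exact: hw_le_n.
have [c0 [/andP [hc0 hc0nz] hdm]] :=
  bigmin_att _ (fun c : 'rV[F]_n => (c \in C) && (c != 0)) hw n c1 hle (introT andP (conj hc1 hc1nz)).
split.
  have [h1 h2 h3] := @part1 p r F K n k m C D kappa hp hF hkadd hkl hksurj i c0 hc0 hc0nz (hd1 i).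
  exists 0%N, (single F n m i c0), 0; split => //; split => //.
  by rewrite h3 /dmin hdm.
move=> c a b hC hnS.
exact: (@part2 p r F K n k m C D kappa hp hF hkadd hkl hkinj hksurj c a b hC hnS hCD).
Qed.
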